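(* Let $k\in\hat I$, $u\in\mathbb C^\times$ and let $\lambda$ be a partition. In the Fock module $\mathcal F^{(k)}(u)$, for every $i\in\hat I$ the series $K_i^\pm(z)$ act on $|\lambda\rangle$ by the expansions in $z^{\mp1}$ of $$\prod_{(x,y)\in CV_i^{(k)}(\lambda)}\psi(q_3^xq_1^yq_2u/z)\prod_{(x,y)\in CC_i^{(k)}(\lambda)}\psi(q_3^xq_1^yq_2^2u/z)^{-1}.$$ In particular, $K_i|\lambda\rangle=q^{|CV_i^{(k)}(\lambda)|-|CC_i^{(k)}(\lambda)|}|\lambda\rangle$.
   Context: Fix $n\ge3$ and let $\hat I=\{0,\dots,n-1\}$, with indices mod $n$; $a\equiv b$ means $n\mid a-b$. Let $q,d\in\mathbb C^\times$ and $q_1=d/q$, $q_2=q^2$, $q_3=1/(dq)$, assumed generic: $q_1^aq_2^bq_3^c=1$ ($a,b,c\in\mathbb Z$) only if $a=b=c$. Let $\psi(z)=\frac{q-q^{-1}z}{1-z}$. The series $K_i^\pm(z)=K_i^{\pm1}\exp(\pm(q-q^{-1})\sum_{m\ge1}H_{i,\pm m}z^{\mp m})$ are Cartan generating series of the quantum toroidal algebra $\mathcal E_n$. Only their action on the Fock module matters here, so no further structure of $\mathcal E_n$ is needed. The Fock module $\mathcal F^{(k)}(u)$ has basis $|\lambda\rangle$ indexed by partitions. On it, $K_i^\pm(z)$ acts diagonally with eigenvalue on $|\lambda\rangle$ given by the expansion in $z^{\mp1}$ of $$\prod_{s\ge1,\ \lambda_s+i\equiv s+k}\psi(q_1^{\lambda_s-1}q_3^{s-1}u/z)\prod_{s\ge1,\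 \lambda_s+i+1\equiv s+k}\psi(q_1^{\lambda_s-1}q_3^{s-2}u/z)^{-1}.$$ The product is truncated at any $r$ with $\lambda_r=0$ and $i\equiv r+k$; the factors with $s\ge r$ multiply to $1$. Corners: let $\lambda'$ be the conjugate partition, $\lambda'_y=|\{x:\lambda_x\ge y\}|$. - A pair $(x,y)\in\mathbb Z_{\ge1}^2$ is a convex corner of $\lambda$ if $\lambda'_{y+1}<\lambda'_y=x$. - It is a concave corner if $\lambda'_y=x-1$ and either $y=1$ or $\lambda'_{y-1}>x-1$. Let $CV_i^{(k)}(\lambda)$ (resp. $CC_i^{(k)}(\lambda)$) be the set of convex (resp. concave) corners $(x,y)$ with $k+x-y\equiv i$; this is the set of corners of color $i$. *)

(* Defs.v *)
From HB Require Import structures.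
From mathcomp Require Import all_boot all_order all_algebra zify.
From mathcomp Require Export reals complex.
Set Implicit Arguments.
Unset Strict Implicit.
Unset Printing Implicit Defensive.
Import Order.TTheory GRing.Theory Num.Theory.
Local Open Scope ring_scope.

Section Params.
Variable F : fieldType.

Definition psi (q w : F) : F := (q - q^-1 * w) / (1 - w).

Definition q1 (q d : F) : F := d / q.
Definition q2 (q : F) : F := q ^+ 2.
Definition q3 (q d : F) : F := (d * q)^-1.

Definition generic_params (q d : F) : Prop :=
  forall a b c : int, (q1 q d) ^ a * (q2 q) ^ b * (q3 q d) ^ c = 1 -> a = b /\ b = c.
End Params.

Definition is_partition (lam : seq nat) : bool :=
  sorted geq lam && all (fun p => 0 < p)%N lam.

(* λ_s for s >= 1 (equal to 0 for s > length) *)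
Definition part (lam : seq nat) (s : nat) : nat := nth 0%N lam s.-1.

Definition conj_part (lam : seq nat) (y : nat) : nat := count (fun p => y <= p)%N lam.

Definition convex_corner (lam : seq nat) (x y : nat) : bool :=
  [&& (0 < x)%N, (0 < y)%N, (conj_part lam y.+1 < conj_part lam y)%N
    & conj_part lam y == x].

Definition concave_corner (lam : seq nat) (x y : nat) : bool :=
  [&& (0 < x)%N, (0 < y)%N, conj_part lam y == x.-1
    & (y == 1%N) || (x.-1 < conj_part lam y.-1)%N].

Definition has_color (n k i x y : nat) : bool := (k + x == i + y %[mod n])%N.

(* A finite box containing every corner (x <= length+1, y <= |λ|+1). *)
Definition corner_box (lam : seq nat) : seq (nat * nat) :=
  let B := (size lam + sumn lam + 1)%N in
  [seq (x, y) | x <- iota 1 B, y <- iota 1 B].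

(* CV_i^{(k)}(λ) and CC_i^{(k)}(λ), as duplicate-free lists *)
Definition CV (n k i : nat) (lam : seq nat) : seq (nat * nat) :=
  [seq p <- corner_box lam | convex_corner lam p.1 p.2 && has_color n k i p.1 p.2].
Definition CC (n k i : nat) (lam : seq nat) : seq (nat * nat) :=
  [seq p <- corner_box lam | concave_corner lam p.1 p.2 && has_color n k i p.1 p.2].

Section Eigen.
Variable F : fieldType.

(* Eigenvalue of K_i^±(z) on |λ> in F^{(k)}(u) as given by the definition of the
   Fock module, as a function of w := u/z, truncated at r (with λ_r = 0, i ≡ r+k). *)
Definition fock_K (q d : F) (n k i : nat) (lam : seq nat) (r : nat) (w : F) : F :=
  (\prod_(1 <= s < r | (part lam s + i == s + k %[mod n])%N)
      psi q ((q1 q d) ^ ((part lam s)%:Z - 1) * (q3 q d) ^ (s%:Z - 1) * w))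
  * (\prod_(1 <= s < r | (part lam s + i + 1 == s + k %[mod n])%N)
      (psi q ((q1 q d) ^ ((part lam s)%:Z - 1) * (q3 q d) ^ (s%:Z - 2) * w))^-1).

Definition corner_K (q d : F) (n k i : nat) (lam : seq nat) (w : F) : F :=
  (\prod_(p <- CV n k i lam)
      psi q ((q3 q d) ^+ p.1 * (q1 q d) ^+ p.2 * q2 q * w))
  * (\prod_(p <- CC n k i lam)
      (psi q ((q3 q d) ^+ p.1 * (q1 q d) ^+ p.2 * (q2 q) ^+ 2 * w))^-1).
End Eigen.

(* Sanity lemmas: the finite box contains all corners, so CV/CC are exactly the corner sets. *)
Lemma count_le_sumn (lam : seq nat) y : (0 < y)%N -> (0 < count (fun p => y <= p)%N lam)%N -> (y <= sumn lam)%N.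
Proof.
move=> y0; elim: lam => //= a l IH.
case: (boolP (y <= a)%N) => /= h; first by move=> _; lia.
move/IH; lia.
Qed.
Lemma in_corner_box lam x y :
  ((x, y) \in corner_box lam) = [&& 0 < x, x <= size lam + sumn lam + 1, 0 < y & y <= size lam + sumn lam + 1]%N.
Proof.
rewrite /corner_box; apply/allpairsP/idP.
  case=> -[a b] /= [ha hb [-> ->]]; move: ha hb; rewrite !mem_iota; lia.
move=> h; exists (x, y) => /=; rewrite !mem_iota; split => //; lia.
Qed.
Lemma mem_CV n k i lam x y :
  ((x, y) \in CV n k i lam) = convex_corner lam x y && has_color n k i x y.
Proof.
rewrite /CV mem_filter /= in_corner_box.
case H: (convex_corner lam x y) => //=.
move: H => /and4P [x0 y0 _ /eqP hx].
have hc : (conj_part lam y <= size lam)%N by exact: count_size.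
have hs : (y <= sumn lam)%N.
  by apply: count_le_sumn => //; rewrite -[count _ _]/(conj_part lam y) hx.
case: has_color; rewrite ?andbT ?andbF // x0 y0 /=; apply/andP; split; lia.
Qed.
Lemma mem_CC n k i lam x y :
  ((x, y) \in CC n k i lam) = concave_corner lam x y && has_color n k i x y.
Proof.
rewrite /CC mem_filter /= in_corner_box.
case H: (concave_corner lam x y) => //=.
move: H => /and4P [x0 y0 /eqP hx hy].
have hc : (conj_part lam y <= size lam)%N by exact: count_size.
have hs : (y <= (sumn lam).+1)%N.
  case/orP: hy => [/eqP -> //| h].
  have : (y.-1 <= sumn lam)%N; last by lia.
  case: (posnP y.-1) => [-> //| yp]; apply: count_le_sumn => //; rewrite -[count _ _]/(conj_part lam y.-1); lia.
case: has_color; rewrite ?andbT ?andbF // x0 y0 /=; apply/andP; split; lia.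
Qed.

(* Main.v *)
Require Import Defs.
From HB Require Import structures.
From mathcomp Require Import all_boot all_order all_algebra zify.
From mathcomp.algebra_tactics Require Import ring.
From mathcomp Require Import reals complex.
Import Order.TTheory GRing.Theory Num.Theory.
Set Implicit Arguments.
Unset Strict Implicit.

Lemma keyK lam x y : is_partition lam -> (0 < x)%N -> (0 < y)%N ->
  (x <= conj_part lam y)%N = (y <= part lam x)%N.
Proof.
rewrite /is_partition /conj_part /part => /andP [] + _.
elim: lam x => [|a l IH] x /=.
  by move=> _ x0 y0; rewrite nth_nil; lia.
move=> hs x0 y0.
have sl : sorted geq l by exact: path_sorted hs.
have al : all (geq a) l.
  by apply: (order_path_min _ hs) => u v w h1 h2; exact: leq_trans h2 h1.
case: x x0 => // x' _ /=.
case: (leqP y a) => ya /=.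
  case: x' => [|x'] /=; first by rewrite ya; lia.
  rewrite add1n ltnS IH //.
have -> : count (fun p => (y <= p)%N) l = 0%N.
  apply/eqP; rewrite -leqn0 leqNgt -has_count; apply/hasP => -[p pl yp].
  move/allP: al => /(_ p pl) /= pa; lia.
rewrite add0n /=; symmetry; apply/negbTE; rewrite -ltnNge.
case: x' => [|x'] //=.
case: (ltnP x' (size l)) => h.
  move/allP: al => /(_ _ (mem_nth 0%N h)) /= pa; lia.
by rewrite nth_default //; lia.
Qed.

Lemma part_mono lam s : is_partition lam -> (0 < s)%N -> (part lam s.+1 <= part lam s)%N.
Proof.
move=> hp s0; case e: (part lam s.+1) => [//|y].
have := keyK hp (isT : (0 < s.+1)%N) (isT : (0 < y.+1)%N).
rewrite e leqnn => h.
by rewrite -(keyK hp s0 (isT : (0 < y.+1)%N)); lia.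
Qed.

Lemma part_big lam s : (size lam < s)%N -> part lam s = 0%N.
Proof. by move=> h; rewrite /part nth_default //; lia. Qed.

Lemma convex_char lam x y : is_partition lam ->
  convex_corner lam x y = [&& (0 < x)%N, (0 < y)%N, part lam x == y & (part lam x.+1 < y)%N].
Proof.
move=> hp; rewrite /convex_corner.
case x0: (0 < x)%N; last by []. case y0: (0 < y)%N; last by [].
have K1 := keyK hp x0 y0.
have K2 := keyK hp (isT : (0 < x.+1)%N) y0.
have K3 := keyK hp x0 (isT : (0 < y.+1)%N).
move: K1 K2 K3; set c1 := conj_part lam y; set c2 := conj_part lam y.+1.
set p1 := part lam x; set p2 := part lam x.+1 => K1 K2 K3 /=.
lia.
Qed.

Lemma concave_char lam x y : is_partition lam ->
  concave_corner lam x y = [&& (0 < x)%N, y == (part lam x).+1 & (x == 1%N) || (part lam x < part lam x.-1)%N].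
Proof.
move=> hp; rewrite /concave_corner.
case x0: (0 < x)%N; last by [].
case y0: (0 < y)%N; last first.
  by move: y0; case: y => //= _; rewrite andbF.
have K1 := keyK hp x0 y0.
rewrite /=.
case: (ltnP 1 x) => x1; last first.
  have ex : x = 1%N by lia. subst x => /=.
  rewrite ?orbT ?andbT.
  case: (boolP (y == 1%N)) => [/eqP ey|ny] /=.
    subst y; move: K1; case: (conj_part lam 1) => [|c] /=; lia.
  have y1 : (0 < y.-1)%N by lia.
  have K4 := keyK hp (isT : (0 < 1)%N) y1.
  move: K1 K4; set c := conj_part lam y; set c' := conj_part lam y.-1; set p := part lam 1.
  lia.
have x1p : (0 < x.-1)%N by lia.
have K2 := keyK hp x1p y0.
have nx1 : (x == 1%N) = false by lia.
rewrite nx1 /=.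
case: (boolP (y == 1%N)) => [/eqP ey|ny] /=.
  subst y; move: K1 K2; set c := conj_part lam 1; set p := part lam x; set p' := part lam x.-1.
  lia.
have y1 : (0 < y.-1)%N by lia.
have K4 := keyK hp x0 y1.
move: K1 K2 K4; set c := conj_part lam y; set p := part lam x; set p' := part lam x.-1.
set c' := conj_part lam y.-1.
lia.
Qed.

Local Open Scope ring_scope.

Definition Qc n k i lam x := [&& (0 < x)%N, (0 < part lam x)%N, (part lam x.+1 < part lam x)%N
   & has_color n k i x (part lam x)].
Definition Qcc n k i lam x := [&& (0 < x)%N, (x == 1%N) || (part lam x < part lam x.-1)%N
   & has_color n k i x (part lam x).+1].

Lemma inner_big (F : fieldType) (t : seq nat) c (b : bool) (G : nat -> F) :
  uniq t -> (b -> c \in t) ->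
  \prod_(y <- t | (y == c) && b) G y = if b then G c else 1.
Proof.
move=> ut; case: b => [/(_ isT) ct|_].
  under eq_bigl => y do rewrite andbT.
  by rewrite -big_filter filter_pred1_uniq // big_seq1.
by rewrite big_pred0 // => y; rewrite andbF.
Qed.

Lemma big_CV (F : fieldType) n k i lam (G : nat * nat -> F) : is_partition lam ->
  \prod_(p <- CV n k i lam) G p =
  \prod_(1 <= x < (size lam + sumn lam + 1).+1 | Qc n k i lam x) G (x, part lam x).
Proof.
move=> hp.
rewrite /CV big_filter /corner_box big_mkcond big_allpairs.
rewrite [RHS]big_mkcond /index_iota subSS subn0.
apply: eq_bigr => x _.
rewrite -big_mkcond /=.
have E : forall y, convex_corner lam x y && has_color n k i x y = (y == part lam x) && Qc n k i lam x.
  move=> y; rewrite convex_char // /Qc.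
  case: (eqVneq y (part lam x)) => [->|ne]; first by rewrite /= -!andbA.
  by rewrite /= !andbF.
under eq_bigl => y do rewrite E.
apply: inner_big; first exact: iota_uniq.
move=> hq.
have hm : (x, part lam x) \in CV n k i lam.
  by rewrite mem_CV E eqxx.
move: hm; rewrite /CV mem_filter in_corner_box /= => /andP [_ h].
rewrite mem_iota; lia.
Qed.

Lemma big_CC (F : fieldType) n k i lam (G : nat * nat -> F) : is_partition lam ->
  \prod_(p <- CC n k i lam) G p =
  \prod_(1 <= x < (size lam + sumn lam + 1).+1 | Qcc n k i lam x) G (x, (part lam x).+1).
Proof.
move=> hp.
rewrite /CC big_filter /corner_box big_mkcond big_allpairs.
rewrite [RHS]big_mkcond /index_iota subSS subn0.
apply: eq_bigr => x _.
rewrite -big_mkcond /=.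
have E : forall y, concave_corner lam x y && has_color n k i x y = (y == (part lam x).+1) && Qcc n k i lam x.
  move=> y; rewrite concave_char // /Qcc.
  case: (eqVneq y (part lam x).+1) => [->|ne]; first by rewrite /= -!andbA.
  by rewrite /= !andbF.
under eq_bigl => y do rewrite E.
apply: inner_big; first exact: iota_uniq.
move=> hq.
have hm : (x, (part lam x).+1) \in CC n k i lam.
  by rewrite mem_CC E eqxx.
move: hm; rewrite /CC mem_filter in_corner_box /= => /andP [_ h].
rewrite mem_iota; lia.
Qed.

Lemma q1_neq0 (F : fieldType) (q d : F) : q != 0 -> d != 0 -> q1 q d != 0.
Proof. by move=> hq hd; rewrite /q1 mulf_neq0 ?invr_eq0. Qed.
Lemma q3_neq0 (F : fieldType) (q d : F) : q != 0 -> d != 0 -> q3 q d != 0.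
Proof. by move=> hq hd; rewrite /q3 invr_eq0 mulf_neq0. Qed.

Lemma arg_cv (F : fieldType) (q d w : F) (x y : nat) : q != 0 -> d != 0 ->
  (q3 q d) ^+ x * (q1 q d) ^+ y * q2 q * w
  = (q1 q d) ^ (y%:Z - 1) * (q3 q d) ^ (x%:Z - 1) * w.
Proof.
move=> hq hd.
rewrite !expfzDr ?q1_neq0 ?q3_neq0 // !exprN1 -!exprnP.
rewrite /q2 /q1 /q3.
set A := (d / q) ^+ y; set B := ((d * q)^-1) ^+ x.
clearbody A B; field; by rewrite hq hd oner_neq0.
Qed.

Lemma arg_cc (F : fieldType) (q d w : F) (x y : nat) : q != 0 -> d != 0 ->
  (q3 q d) ^+ x * (q1 q d) ^+ y.+1 * (q2 q) ^+ 2 * w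
  = (q1 q d) ^ (y%:Z - 1) * (q3 q d) ^ (x%:Z - 2) * w.
Proof.
move=> hq hd.
have -> : x%:Z - 2 = x%:Z + (-1) + (-1) by lia.
rewrite !expfzDr ?q1_neq0 ?q3_neq0 // !exprN1 -!exprnP exprS.
rewrite /q2 /q1 /q3.
set A := (d / q) ^+ y; set B := ((d * q)^-1) ^+ x.
clearbody A B; field; by rewrite hq hd oner_neq0.
Qed.

Lemma big_trunc (F : fieldType) m0 n1 n2 (P : pred nat) (G : nat -> F) :
  (forall s, (m0 <= s)%N -> ~~ P s) -> (m0 <= n1)%N -> (m0 <= n2)%N ->
  \prod_(1 <= s < n1 | P s) G s = \prod_(1 <= s < n2 | P s) G s.
Proof.
move=> hP h1 h2.
suff E : forall N, (m0 <= N)%N -> \prod_(1 <= s < N | P s) G s = \prod_(1 <= s < m0 | P s) G s.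
  by rewrite E // E.
move=> N hN; rewrite (big_nat_widen _ _ _ _ _ hN); apply: eq_bigl => s /=.
case: (ltnP s m0) => h; first by rewrite andbT.
by rewrite andbF (negbTE (hP s h)).
Qed.

Definition acond n k i lam s := (part lam s + i == s + k %[mod n])%N.
Definition bcond n k i lam s := (part lam s + i + 1 == s + k %[mod n])%N.

Lemma col_a n k i lam s : has_color n k i s (part lam s) = acond n k i lam s.
Proof. by rewrite /has_color /acond eq_sym addnC [(k + s)%N]addnC. Qed.
Lemma col_b n k i lam s : has_color n k i s (part lam s).+1 = bcond n k i lam s.
Proof.
rewrite /has_color /bcond eq_sym [(k + s)%N]addnC.
by have -> : (i + (part lam s).+1 = part lam s + i + 1)%N by lia.
Qed.

Lemma mod_contra n k i r : (2 <= n)%N -> (i == r.+1 + k %[mod n])%N -> (i == r + k %[mod n])%N -> False.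
Proof.
move=> n2 /eqP h1 /eqP h2.
have : ((r + k) + 1 == (r + k) + 0 %[mod n])%N by rewrite addn0 -h2 addn1 -addSn -h1.
by rewrite eqn_modDl !modn_small //; lia.
Qed.

Lemma condA n k i lam t : is_partition lam -> (0 < t)%N ->
  acond n k i lam t && ~~ Qc n k i lam t = acond n k i lam t && (part lam t.+1 == part lam t).
Proof.
move=> hp t0; rewrite /Qc col_a t0 /=.
have := part_mono hp t0.
case: (acond n k i lam t); rewrite /= ?andbT //.
lia.
Qed.

Lemma condB n k i lam t : is_partition lam -> (0 < t)%N ->
  bcond n k i lam t.+1 && ~~ Qcc n k i lam t.+1 = acond n k i lam t && (part lam t.+1 == part lam t).
Proof.
move=> hp t0; rewrite /Qcc col_b /=.
have := part_mono hp t0.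
have t1 : (t.+1 == 1%N) = false by lia.
rewrite t1 /=.
case: (eqVneq (part lam t.+1) (part lam t)) => [e|ne] hm.
  rewrite !andbT e ltnn /= andbT.
  rewrite /bcond /acond e.
  have -> : (t.+1 + k = (t + k) + 1)%N by lia.
  by rewrite eqn_modDr.
rewrite !andbF.
case: (bcond _ _ _ _ _) => //=.
rewrite andbT; apply/negbF; lia.
Qed.

Lemma matchXY (F : fieldType) (q d w : F) n k i lam r : (2 <= n)%N -> is_partition lam ->
  (size lam < r)%N -> (i == r + k %[mod n])%N ->
  \prod_(1 <= s < r | acond n k i lam s && ~~ Qc n k i lam s)
     psi q ((q1 q d) ^ ((part lam s)%:Z - 1) * (q3 q d) ^ (s%:Z - 1) * w)
  = \prod_(1 <= s < r | bcond n k i lam s && ~~ Qcc n k i lam s)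
     psi q ((q1 q d) ^ ((part lam s)%:Z - 1) * (q3 q d) ^ (s%:Z - 2) * w).
Proof.
move=> n2 hp hr hi.
case: r hr hi => [|[|r']] hr hi; try by rewrite !big_geq.
rewrite [RHS]big_ltn_cond //.
have -> : bcond n k i lam 1 && ~~ Qcc n k i lam 1 = false.
  by rewrite /Qcc col_b /=; case: bcond.
rewrite [RHS]big_add1 /=.
rewrite big_mkcond big_nat_recr //.
have -> : acond n k i lam r'.+1 && ~~ Qc n k i lam r'.+1 = false.
  rewrite condA // part_big; last by lia.
  case: (eqVneq 0%N (part lam r'.+1)) => [e|]; last by rewrite andbF.
  rewrite andbT /acond -e add0n.
  by apply/negbTE/negP => h; apply: (mod_contra n2 hi h).
rewrite /= mulr1 [RHS]big_mkcond.
apply: eq_big_nat => t /andP [t0 _].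
rewrite condA // condB //.
case: (eqVneq (part lam t.+1) (part lam t)) => [e|]; last by rewrite !andbF.
rewrite !andbT e.
by have -> : (t.+1)%:Z - 2 = t%:Z - 1 by lia.
Qed.

Lemma core (F : fieldType) (q d w : F) n k i lam r :
  (2 <= n)%N -> q != 0 -> d != 0 -> is_partition lam -> (size lam < r)%N ->
  (i == r + k %[mod n])%N ->
  (forall t, (1 <= t < r)%N ->
     psi q ((q1 q d) ^ ((part lam t)%:Z - 1) * (q3 q d) ^ (t%:Z - 1) * w) != 0) ->
  fock_K q d n k i lam r w = corner_K q d n k i lam w.
Proof.
move=> n2 hq hd hp hr hi hnz.
set B := (size lam + sumn lam + 1)%N.
have HA : \prod_(1 <= s < r | (part lam s + i == s + k %[mod n])%N)
      psi q ((q1 q d) ^ ((part lam s)%:Z - 1) * (q3 q d) ^ (s%:Z - 1) * w)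
  = \prod_(1 <= s < B.+1 | Qc n k i lam s)
      psi q ((q1 q d) ^ ((part lam s)%:Z - 1) * (q3 q d) ^ (s%:Z - 1) * w)
    * \prod_(1 <= s < r | acond n k i lam s && ~~ Qc n k i lam s)
      psi q ((q1 q d) ^ ((part lam s)%:Z - 1) * (q3 q d) ^ (s%:Z - 1) * w).
  rewrite (bigID (Qc n k i lam)) /=; congr (_ * _).
  rewrite (eq_bigl (Qc n k i lam)); last first.
    move=> s; apply: andb_idl; rewrite /Qc col_a => /and4P [_ _ _ h]; exact: h.
  apply: (big_trunc (m0 := (size lam).+1)) => //; last by rewrite /B; lia.
  move=> s hs; rewrite /Qc part_big //; by rewrite andbF.
have HB : \prod_(1 <= s < r | (part lam s + i + 1 == s + k %[mod n])%N)
      (psi q ((q1 q d) ^ ((part lam s)%:Z - 1) * (q3 q d) ^ (s%:Z - 2) * w))^-1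
  = \prod_(1 <= s < B.+1 | Qcc n k i lam s)
      (psi q ((q1 q d) ^ ((part lam s)%:Z - 1) * (q3 q d) ^ (s%:Z - 2) * w))^-1
    * (\prod_(1 <= s < r | bcond n k i lam s && ~~ Qcc n k i lam s)
      psi q ((q1 q d) ^ ((part lam s)%:Z - 1) * (q3 q d) ^ (s%:Z - 2) * w))^-1.
  rewrite (bigID (Qcc n k i lam)) /= -prodfV; congr (_ * _).
  rewrite (eq_bigl (Qcc n k i lam)); last first.
    move=> s; apply: andb_idl; rewrite /Qcc col_b => /and3P [_ _ h]; exact: h.
  apply: (big_trunc (m0 := minn r (size lam).+2)); last 2 first.
  - lia.
  - rewrite /B; lia.
  move=> s hs; rewrite /Qcc col_b.
  case: (ltnP s (size lam).+2) => hs2.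
    have es : s = r by lia.
    have es' : s = (size lam).+1 by lia.
    subst s; rewrite /bcond part_big // add0n.
    apply/negP => /and3P [_ _ h].
    rewrite es' in hi h.
    apply: (mod_contra n2 hi).
    have e2 : ((size lam).+1 + k = (size lam + k) + 1)%N by lia.
    by rewrite e2 eqn_modDr in h.
  rewrite (@part_big lam s) ?(@part_big lam s.-1); try lia.
rewrite /fock_K /corner_K big_CV // big_CC // HA HB -(matchXY q d w n2 hp hr hi).
have E1 : \prod_(1 <= x < B.+1 | Qc n k i lam x)
    psi q (q3 q d ^+ (x, part lam x).1 * q1 q d ^+ (x, part lam x).2 * q2 q * w)
  = \prod_(1 <= s < B.+1 | Qc n k i lam s)
      psi q ((q1 q d) ^ ((part lam s)%:Z - 1) * (q3 q d) ^ (s%:Z - 1) * w).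
  by apply: eq_bigr => x _; rewrite /= arg_cv.
have E2 : \prod_(1 <= x < B.+1 | Qcc n k i lam x)
    (psi q (q3 q d ^+ (x, (part lam x).+1).1 * q1 q d ^+ (x, (part lam x).+1).2 * q2 q ^+ 2 * w))^-1
  = \prod_(1 <= s < B.+1 | Qcc n k i lam s)
      (psi q ((q1 q d) ^ ((part lam s)%:Z - 1) * (q3 q d) ^ (s%:Z - 2) * w))^-1.
  by apply: eq_bigr => x _; rewrite /= arg_cc.
rewrite E1 E2.
set X := \prod_(1 <= s < r | _) _.
have hX : X != 0.
  rewrite prodf_seq_neq0; apply/allP => t; rewrite mem_index_iota => ht.
  by apply/implyP => _; apply: hnz.
set C := \prod_(1 <= s < B.+1 | _) _.
set D := \prod_(1 <= s < B.+1 | _) _.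
by rewrite mulrACA mulfV // mulr1.
Qed.

Lemma prod_const_seq (F : fieldType) (T : Type) (s : seq T) (c : F) :
  \prod_(p <- s) c = c ^+ size s.
Proof. by elim: s => [|a s IH]; rewrite ?big_nil ?expr0 // big_cons IH exprS. Qed.

Lemma psi0 (F : fieldType) (q : F) : psi q 0 = q.
Proof. by rewrite /psi mulr0 !subr0 invr1 mulr1. Qed.

Lemma psi_nz (F : fieldType) (q x : F) : q != 0 -> x != q ^+ 2 -> x != 1 -> psi q x != 0.
Proof.
move=> hq h1 h2; rewrite /psi mulf_neq0 ?invr_eq0 //.
  rewrite subr_eq0; apply: contra h1 => /eqP e.
  have -> : x = q * (q^-1 * x) by rewrite mulrA mulfV ?mul1r.
  by rewrite -e expr2.
by rewrite subr_eq0 eq_sym.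
Qed.

Lemma solve_z (F : fieldType) (c u z y : F) : c != 0 -> u != 0 -> z != 0 ->
  c * (u / z) = y -> z = c * u / y.
Proof. move=> hc hu hz <-; field. by rewrite hc hu hz. Qed.

Unset Implicit Arguments.

Theorem mainTheorem4 (R : realType) (n : nat) (q d u : R[i]) (k i : 'I_n)
    (lam : seq nat) (r : nat) :
  (3 <= n)%N -> q != 0 -> d != 0 -> generic_params q d -> u != 0 ->
  is_partition lam ->
  (size lam < r)%N -> (i == r + k %[mod n])%N ->
  (exists S : seq R[i], forall z : R[i], z \notin S ->
      fock_K q d n k i lam r (u / z) = corner_K q d n k i lam (u / z))
  /\
  fock_K q d n k i lam r 0
    = q ^ ((size (CV n k i lam))%:Z - (size (CC n k i lam))%:Z).
Proof.
move=> n3 hq hd _ hu hp hr hi.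
have n2 : (2 <= n)%N by lia.
pose c t := (q1 q d) ^ ((part lam t)%:Z - 1) * (q3 q d) ^ (t%:Z - 1).
have hc : forall t, c t != 0.
  by move=> t; rewrite mulf_neq0 // expfz_neq0 ?q1_neq0 ?q3_neq0.
split.
  exists ([seq c t * u / q ^+ 2 | t <- iota 0 r] ++ [seq c t * u | t <- iota 0 r]).
  move=> z; rewrite mem_cat negb_or => /andP [h1 h2].
  apply: core => // t /andP [t1 t2].
  have tr : t \in iota 0 r by rewrite mem_iota; lia.
  rewrite -/(c t).
  case: (eqVneq z 0) => [->|hz].
    by rewrite invr0 !mulr0 psi0.
  apply: psi_nz => //.
    apply/negP => /eqP e; move/mapP: h1; apply; exists t => //.
    by apply: solve_z.
  apply/negP => /eqP e; move/mapP: h2; apply; exists t => //.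
  by rewrite (solve_z (hc t) hu hz e) divr1.
rewrite (core (w := 0) n2 hq hd hp hr hi); last first.
  by move=> t _; rewrite mulr0 psi0.
rewrite /corner_K.
under eq_bigr => p _ do rewrite mulr0 psi0.
under [X in _ * X]eq_bigr => p _ do rewrite mulr0 psi0.
rewrite !prod_const_seq expfzDr // -exprnP -invr_expz -exprnP.
by rewrite exprVn.
Qed.
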